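(* For every real $\gamma<1$ there exists an infinite binary sequence $\omega$ and an integer $N$ such that every substring $\omega_i\omega_{i+1}\ldots\omega_{i+n-1}$ of $\omega$ of length $n\ge N$ satisfies $K(\omega_i\ldots\omega_{i+n-1})\ge \gamma n$.
   Context: $K$ denotes prefix Kolmogorov complexity. *)

(* Defs.v *)
(* Prefix Kolmogorov complexity, defined from scratch:
   computability = Kleene's mu-recursive functions (big-step semantics),
   binary strings = list bool, encoded bijectively into nat. *)
From Stdlib Require Import Reals List Arith.
Import ListNotations.

Inductive prf : Type :=
| PZero : prf
| PSucc : prf
| PProj : nat -> prf
| PComp : prf -> list prf -> prf
| PRec  : prf -> prf -> prf
| PMu   : prf -> prf.

Inductive eval : prf -> list nat -> nat -> Prop :=
| eZero v : eval PZero v 0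
| eSucc x v : eval PSucc (x :: v) (S x)
| eProj i v : i < length v -> eval (PProj i) v (nth i v 0)
| eComp f gs v ws y : evals gs v ws -> eval f ws y -> eval (PComp f gs) v y
| eRec0 f g v y : eval f v y -> eval (PRec f g) (0 :: v) y
| eRecS f g n v r y :
    eval (PRec f g) (n :: v) r -> eval g (n :: r :: v) y ->
    eval (PRec f g) (S n :: v) y
| eMu f v n :
    eval f (n :: v) 0 ->
    (forall m, m < n -> exists k, eval f (m :: v) (S k)) ->
    eval (PMu f) v n
with evals : list prf -> list nat -> list nat -> Prop :=
| esNil v : evals [] v []
| esCons g gs v w ws : eval g v w -> evals gs v ws -> evals (g :: gs) v (w :: ws).

(* Bijective encoding of binary strings into nat. *)
Fixpoint code (s : list bool) : nat :=
  match s with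
  | [] => 0
  | b :: s' => 2 * code s' + (if b then 2 else 1)
  end.

Definition machine := list bool -> list bool -> Prop.

Definition computable (M : machine) : Prop :=
  exists f : prf, forall p x, M p x <-> eval f [code p] (code x).

Definition is_prefix (p q : list bool) : Prop := exists r, q = p ++ r.

Definition prefix_free (M : machine) : Prop :=
  forall p q x y, M p x -> M q y -> is_prefix p q -> p = q.

Definition prefix_machine (M : machine) : Prop := computable M /\ prefix_free M.

Definition optimal_prefix_machine (U : machine) : Prop :=
  prefix_machine U /\
  forall M, prefix_machine M ->
    exists c : nat, forall p x, M p x ->
      exists q, U q x /\ length q <= length p + c.

Definition is_K (U : machine) (x : list bool) (k : nat) : Prop :=
  (exists p, U p x /\ length p = k) /\ (forall p, U p x -> k <= length p).

Definition substring (omega : nat -> bool) (i n : nat) : list bool :=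
  map (fun k => omega (i + k)) (seq 0 n).

(* Main.v *)
Require Import Defs.
From Stdlib Require Import Reals List Arith Lia Lra ClassicalEpsilon.
Import ListNotations.
Open Scope R_scope.

Section PrfInd.
Variable P : prf -> Prop.
Hypotheses (HZ : P PZero) (HS : P PSucc) (HP : forall i, P (PProj i))
  (HC : forall f gs, P f -> Forall P gs -> P (PComp f gs))
  (HR : forall f g, P f -> P g -> P (PRec f g))
  (HM : forall f, P f -> P (PMu f)).
Fixpoint prf_ind' (f : prf) : P f :=
  match f with
  | PZero => HZ | PSucc => HS | PProj i => HP i
  | PComp f gs => HC f gs (prf_ind' f)
      ((fix go (l : list prf) : Forall P l :=
         match l with [] => Forall_nil _ | g :: l => Forall_cons _ (prf_ind' g) (go l) end) gs)
  | PRec f g => HR f g (prf_ind' f) (prf_ind' g)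
  | PMu f => HM f (prf_ind' f)
  end.
End PrfInd.

Definition Det (f : prf) := forall v y y', eval f v y -> eval f v y' -> y = y'.

Lemma evals_det gs : Forall Det gs -> forall v ws ws', evals gs v ws -> evals gs v ws' -> ws = ws'.
Proof.
  induction 1 as [|g gs Hg Hgs IH]; intros v ws ws' H1 H2.
  - inversion H1; inversion H2; subst; reflexivity.
  - inversion H1; subst; inversion H2; subst.
    f_equal; [eapply Hg; eauto | eapply IH; eauto].
Qed.

Lemma eval_det : forall f, Det f.
Proof.
  apply prf_ind'; unfold Det.
  - intros v y y' H1 H2; inversion H1; inversion H2; subst; reflexivity.
  - intros v y y' H1 H2; inversion H1; inversion H2; subst; congruence.
  - intros i v y y' H1 H2; inversion H1; inversion H2; subst; reflexivity.
  - intros f gs Hf Hgs v y y' H1 H2; inversion H1; subst; inversion H2; subst.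
    assert (ws = ws0) by (eapply evals_det; eauto). subst. eapply Hf; eauto.
  - intros f g Hf Hg v y y' H1 H2.
    destruct v as [|n v]; [inversion H1|].
    revert y y' H1 H2; induction n; intros y y' H1 H2.
    + inversion H1; subst; inversion H2; subst. eapply Hf; eauto.
    + inversion H1; subst; inversion H2; subst.
      assert (r = r0) by (eapply IHn; eauto). subst. eapply Hg; eauto.
  - intros f Hf v y y' H1 H2; inversion H1; subst; inversion H2; subst.
    destruct (lt_eq_lt_dec y y') as [[Hl|He]|Hl]; auto.
    + destruct (H5 y Hl) as [k Hk]. specialize (Hf _ _ _ H0 Hk). discriminate.
    + destruct (H3 y' Hl) as [k Hk]. specialize (Hf _ _ _ H4 Hk). discriminate.
Qed.

Lemma code_inj : forall s t, code s = code t -> s = t.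
Proof.
  induction s as [|a s IH]; destruct t as [|b t]; simpl; intros H; auto.
  - destruct b; lia.
  - destruct a; lia.
  - destruct a, b; try lia; f_equal; apply IH; lia.
Qed.

Lemma comp_functional (U : machine) : computable U -> forall p x y, U p x -> U p y -> x = y.
Proof.
  intros [f Hf] p x y H1 H2. apply Hf in H1. apply Hf in H2.
  apply code_inj. eapply eval_det; eauto.
Qed.

Fixpoint sumN (m : nat) (h : nat -> R) : R :=
  match m with O => 0 | S m => sumN m h + h m end.

Lemma sumN_le m h h' : (forall j, (j < m)%nat -> h j <= h' j) -> sumN m h <= sumN m h'.
Proof. induction m; simpl; intros H; [lra|]. apply Rplus_le_compat; auto. Qed.

Lemma sumN_ext m h h' : (forall j, (j < m)%nat -> h j = h' j) -> sumN m h = sumN m h'.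
Proof. intros H; apply Rle_antisym; apply sumN_le; intros j Hj; rewrite H; auto; lra. Qed.

Lemma sumN_scal m k h : sumN m (fun j => k * h j) = k * sumN m h.
Proof. induction m; simpl; [ring|]. rewrite IHm; ring. Qed.

Lemma sumN_plus m h h' : sumN m (fun j => h j + h' j) = sumN m h + sumN m h'.
Proof. induction m; simpl; [ring|]. rewrite IHm; ring. Qed.

Lemma sumN_nonneg m h : (forall j, (j < m)%nat -> 0 <= h j) -> 0 <= sumN m h.
Proof. induction m; simpl; intros H; [lra|]. assert (0 <= h m) by auto. assert (0 <= sumN m h) by auto. lra. Qed.

Lemma sumN_ge_term m h j : (forall j, (j < m)%nat -> 0 <= h j) -> (j < m)%nat -> h j <= sumN m h.
Proof.
  induction m; simpl; intros H Hj; [lia|].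
  destruct (Nat.eq_dec j m) as [->|Hne].
  - assert (0 <= sumN m h) by (apply sumN_nonneg; auto). lra.
  - assert (h j <= sumN m h) by (apply IHm; auto; lia). assert (0 <= h m) by auto. lra.
Qed.

Fixpoint sumS (n : nat) (g : list bool -> R) : R :=
  match n with
  | O => g []
  | S n => sumS n (fun x => g (false :: x)) + sumS n (fun x => g (true :: x))
  end.

Lemma sumS_le n : forall f g, (forall x, length x = n -> f x <= g x) -> sumS n f <= sumS n g.
Proof.
  induction n; simpl; intros f g H; [apply H; reflexivity|].
  apply Rplus_le_compat; apply IHn; intros x Hx; apply H; simpl; lia.
Qed.

Lemma sumS_ext n f g : (forall x, length x = n -> f x = g x) -> sumS n f = sumS n g.
Proof. intros H; apply Rle_antisym; apply sumS_le; intros x Hx; rewrite H; auto; lra. Qed.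

Lemma sumS_plus n : forall f g, sumS n (fun x => f x + g x) = sumS n f + sumS n g.
Proof. induction n; simpl; intros; [ring|]. rewrite !IHn; ring. Qed.

Lemma sumS_scal n : forall k f, sumS n (fun x => k * f x) = k * sumS n f.
Proof. induction n; simpl; intros; [ring|]. rewrite !IHn; ring. Qed.

Lemma sumS_const n : forall k, sumS n (fun _ => k) = k * 2 ^ n.
Proof. induction n; simpl; intros; [ring|]. rewrite !IHn; ring. Qed.

Lemma sumS_zero n : sumS n (fun _ => 0) = 0.
Proof. rewrite sumS_const; ring. Qed.

Lemma sumS_nonneg n f : (forall x, 0 <= f x) -> 0 <= sumS n f.
Proof. intros H. rewrite <- (Rmult_0_l (2 ^ n)), <- sumS_const. apply sumS_le; auto. Qed.

Lemma sumS_app a : forall b g, sumS (a + b) g = sumS a (fun z => sumS b (fun y => g (z ++ y))).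
Proof. induction a; simpl; intros; [reflexivity|]. rewrite !IHa. reflexivity. Qed.

Lemma sumS_comm n : forall m g, sumS n (fun x => sumS m (fun y => g x y)) = sumS m (fun y => sumS n (fun x => g x y)).
Proof.
  induction n; simpl; intros; [reflexivity|].
  rewrite (IHn m (fun x y => g (false :: x) y)), (IHn m (fun x y => g (true :: x) y)).
  rewrite <- sumS_plus. reflexivity.
Qed.

Lemma sumS_sumN n m : forall h, sumS n (fun x => sumN m (fun j => h j x)) = sumN m (fun j => sumS n (h j)).
Proof.
  induction m; simpl; intros.
  - rewrite sumS_zero. reflexivity.
  - rewrite sumS_plus, IHm. reflexivity.
Qed.

Lemma sumS_ge_point l : forall g p, (forall y, 0 <= g y) -> length p = l -> g p <= sumS l g.
Proof.
  induction l; intros g p Hg Hp; destruct p as [|b p]; simpl in *; try lia.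
  - lra.
  - assert (0 <= sumS l (fun x => g (false :: x))) by (apply sumS_nonneg; auto).
    assert (0 <= sumS l (fun x => g (true :: x))) by (apply sumS_nonneg; auto).
    destruct b.
    + assert (g (true :: p) <= sumS l (fun x => g (true :: x))) by (apply (IHl (fun x => g (true :: x))); auto). lra.
    + assert (g (false :: p) <= sumS l (fun x => g (false :: x))) by (apply (IHl (fun x => g (false :: x))); auto). lra.
Qed.

Definition indP (P : Prop) : R := if excluded_middle_informative P then 1 else 0.

Lemma ind_T (P : Prop) : P -> indP P = 1.
Proof. unfold indP; destruct excluded_middle_informative; tauto. Qed.
Lemma ind_F (P : Prop) : ~ P -> indP P = 0.
Proof. unfold indP; destruct excluded_middle_informative; tauto. Qed.
Lemma ind_bnd (P : Prop) : 0 <= indP P <= 1.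
Proof. unfold indP; destruct excluded_middle_informative; lra. Qed.

Lemma sumS_atmost1 n : forall (P : list bool -> Prop), (forall b b', P b -> P b' -> b = b') ->
  sumS n (fun b => indP (P b)) <= 1.
Proof.
  induction n; simpl; intros P HP; [apply ind_bnd|].
  destruct (classic (exists x, P (false :: x))) as [[x Hx]|Hno].
  - assert (sumS n (fun x => indP (P (true :: x))) = 0).
    { rewrite <- (sumS_zero n). apply sumS_ext; intros y _.
      apply ind_F; intros Hy. specialize (HP _ _ Hx Hy). discriminate. }
    assert (sumS n (fun x => indP (P (false :: x))) <= 1) by (apply (IHn (fun x => P (false :: x))); intros; injection (HP _ _ H0 H1); auto).
    lra.
  - assert (sumS n (fun x => indP (P (false :: x))) = 0).
    { rewrite <- (sumS_zero n). apply sumS_ext; intros y _.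
      apply ind_F; intros Hy. apply Hno; eauto. }
    assert (sumS n (fun x => indP (P (true :: x))) <= 1) by (apply (IHn (fun x => P (true :: x))); intros; injection (HP _ _ H0 H1); auto).
    lra.
Qed.

Section Comb.
Variable F : list bool -> Prop.
Hypothesis HF0 : ~ F [].

Definition good (x : list bool) := forall a b c, x = a ++ b ++ c -> ~ F b.

Lemma good_prefix x y : good (x ++ y) -> good x.
Proof. intros H a b c E. apply (H a b (c ++ y)). subst. rewrite !app_assoc. reflexivity. Qed.

Definition T (n j : nat) (x : list bool) :=
  indP (F (skipn (n - j) x)) * indP (good (firstn (n - j) x)).

Lemma T_nonneg n j x : 0 <= T n j x.
Proof. unfold T. pose proof (ind_bnd (F (skipn (n - j) x))). pose proof (ind_bnd (good (firstn (n - j) x))). nra. Qed.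

Lemma pointwise n w t : length w = n ->
  indP (good w) <= indP (good (w ++ [t])) + sumN (S n) (fun j => T n j (w ++ [t])).
Proof.
  intros Hw.
  assert (0 <= sumN (S n) (fun j => T n j (w ++ [t]))) by (apply sumN_nonneg; intros; apply T_nonneg).
  destruct (classic (good w)) as [Gw|Gw]; [|rewrite (ind_F _ Gw); pose proof (ind_bnd (good (w ++ [t]))); lra].
  destruct (classic (good (w ++ [t]))) as [G|G]; [rewrite (ind_T _ G), (ind_T _ Gw); lra|].
  rewrite (ind_T _ Gw), (ind_F _ G).
  assert (exists a b, w ++ [t] = a ++ b /\ F b /\ good a) as (a & b & E & Fb & Ga).
  { apply NNPP; intros Hno. apply G. intros a b c E Fb.
    destruct (list_eq_dec Bool.bool_dec c []) as [->|Hc].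
    - apply Hno. exists a, b. split; [rewrite E, app_nil_r; reflexivity|split; auto].
      destruct (list_eq_dec Bool.bool_dec b []) as [->|Hb]; [contradiction|].
      destruct (exists_last Hb) as (b' & t' & ->).
      rewrite app_nil_r, app_assoc in E. apply app_inj_tail in E as [E _].
      subst w. eapply good_prefix; eauto.
    - destruct (exists_last Hc) as (c' & t' & ->).
      rewrite !app_assoc in E. apply app_inj_tail in E as [E _].
      apply (Gw a b c'); auto. subst w. rewrite !app_assoc. reflexivity. }
  assert (Hb : b <> []) by (intros ->; contradiction).
  assert (Hl : length (w ++ [t]) = length (a ++ b)) by (rewrite E; reflexivity).
  rewrite !length_app in Hl. simpl in Hl.
  destruct b as [|b0 b1]; [contradiction|]. simpl in Hl.
  set (j := length b1).
  assert (HT : T n j (w ++ [t]) = 1).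
  { unfold T. replace (n - j)%nat with (length a) by (unfold j; lia).
    rewrite E, skipn_app, firstn_app, Nat.sub_diag, skipn_all, firstn_all. simpl.
    rewrite app_nil_r. rewrite (ind_T _ Fb), (ind_T _ Ga). ring. }
  assert (T n j (w ++ [t]) <= sumN (S n) (fun j => T n j (w ++ [t]))).
  { apply (sumN_ge_term (S n) (fun j => T n j (w ++ [t])) j); [intros; apply T_nonneg|unfold j; lia]. }
  lra.
Qed.

Definition s n := sumS n (fun x => indP (good x)).
Definition c j := sumS j (fun x => indP (F x)).

Lemma T_sum n j : (j <= n)%nat -> sumS (S n) (T n j) = c (S j) * s (n - j).
Proof.
  intros Hj. replace (S n) with ((n - j) + S j)%nat by lia. rewrite sumS_app.
  unfold s. rewrite <- sumS_scal. apply sumS_ext; intros a Ha.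
  unfold c. rewrite Rmult_comm, <- sumS_scal. apply sumS_ext; intros b Hb.
  unfold T. rewrite <- Ha.
  rewrite skipn_app, firstn_app, Nat.sub_diag, skipn_all, firstn_all. simpl.
  rewrite app_nil_r. ring.
Qed.

Lemma recurrence n : 2 * s n <= s (S n) + sumN (S n) (fun j => c (S j) * s (n - j)).
Proof.
  assert (E1 : 2 * s n = sumS n (fun w => indP (good w) + indP (good w))).
  { unfold s. rewrite sumS_plus. ring. }
  rewrite E1.
  rewrite <- (sumN_ext (S n) (fun j => sumS (S n) (T n j))) by (intros; apply T_sum; lia).
  rewrite <- sumS_sumN. unfold s. rewrite <- sumS_plus.
  replace (S n) with (n + 1)%nat by lia. rewrite sumS_app.
  apply sumS_le; intros w Hw. simpl.
  pose proof (pointwise n w false Hw). pose proof (pointwise n w true Hw).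
  replace (n + 1)%nat with (S n) by lia. lra.
Qed.

End Comb.

Lemma levin_real (s c : nat -> R) (beta : R) : 0 < beta -> s O = 1 ->
  (forall j, 0 <= c j) ->
  (forall n, 2 * s n <= s (S n) + sumN (S n) (fun j => c (S j) * s (n - j)%nat)) ->
  (forall n, sumN n (fun j => c (S j) * beta ^ S j) <= 2 * beta - 1) ->
  forall n, 0 < s n /\ forall j, (j <= n)%nat -> s (n - j)%nat <= beta ^ j * s n.
Proof.
  intros Hb H0 Hc Hrec Hsum. induction n as [|n [Hpos IH]].
  - split; [lra|]. intros j Hj. replace j with O by lia. simpl. lra.
  - assert (Hstep : s n / beta <= s (S n)).
    { pose proof (Hrec n) as R1.
      assert (R2 : sumN (S n) (fun j => c (S j) * s (n - j)%nat) <=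
                   s n / beta * sumN (S n) (fun j => c (S j) * beta ^ S j)).
      { rewrite <- sumN_scal. apply sumN_le; intros j Hj.
        specialize (IH j ltac:(lia)). specialize (Hc (S j)).
        replace (s n / beta * (c (S j) * beta ^ S j)) with (c (S j) * (beta ^ j * s n))
          by (simpl; field; lra).
        apply Rmult_le_compat_l; auto. }
      pose proof (Hsum (S n)) as R3.
      assert (0 <= s n / beta) by (apply Rle_mult_inv_pos; lra).
      assert (s n / beta * sumN (S n) (fun j => c (S j) * beta ^ S j) <= s n / beta * (2 * beta - 1))
        by (apply Rmult_le_compat_l; auto).
      assert (s n / beta * (2 * beta - 1) = 2 * s n - s n / beta) by (field; lra).
      lra. }
    assert (0 < s n / beta) by (apply Rdiv_lt_0_compat; lra).
    split; [lra|].
    intros j Hj. destruct j as [|j]; [simpl; lra|].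
    simpl. specialize (IH j ltac:(lia)).
    assert (s n <= beta * s (S n)).
    { apply (Rmult_le_compat_l beta) in Hstep; [|lra].
      replace (beta * (s n / beta)) with (s n) in Hstep by (field; lra). lra. }
    assert (0 <= beta ^ j) by (apply pow_le; lra).
    assert (beta ^ j * s n <= beta ^ j * (beta * s (S n))) by (apply Rmult_le_compat_l; auto).
    lra.
Qed.

Lemma pow2_sum X : 0 < X -> forall m, sumN m (fun l => indP (INR l < X) * 2 ^ l) <= 2 * Rpower 2 X.
Proof.
  intros HX.
  assert (A : forall m, sumN m (fun l => indP (INR l < X) * 2 ^ l) <= 2 ^ m - 1).
  { induction m; simpl; [lra|]. pose proof (ind_bnd (INR m < X)).
    assert (0 < 2 ^ m) by (apply pow_lt; lra). nra. }
  assert (0 < Rpower 2 X) by (unfold Rpower; apply exp_pos).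
  induction m; simpl; [lra|].
  destruct (classic (INR m < X)) as [Hm|Hm].
  - rewrite (ind_T _ Hm). specialize (A m).
    assert (2 ^ m < Rpower 2 X).
    { rewrite <- Rpower_pow by lra. apply Rpower_lt; lra. }
    lra.
  - rewrite (ind_F _ Hm). lra.
Qed.

Lemma sumN_S m h : sumN (S m) h = sumN m h + h m.
Proof. reflexivity. Qed.

Lemma geo (r : R) (N : nat) : 0 <= r < 1 -> (1 <= N)%nat -> forall n,
  (1 - r) * sumN n (fun j => indP (N <= S j)%nat * r ^ S j) + r ^ (Nat.max N (S n)) <= r ^ N.
Proof.
  intros Hr HN. induction n.
  - simpl. replace (Nat.max N 1) with N by lia. lra.
  - rewrite sumN_S. destruct (le_lt_dec N (S n)) as [H|H].
    + rewrite (ind_T _ H). rewrite Nat.max_r in IHn by lia. rewrite Nat.max_r by lia.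
      replace (r ^ S (S n)) with (r * r ^ S n) by (simpl; ring). nra.
    + rewrite ind_F by lia. rewrite Nat.max_l in IHn by lia. rewrite Nat.max_l by lia. lra.
Qed.

Section Bound.
Variable U : list bool -> list bool -> Prop.
Hypothesis Ufun : forall p x y, U p x -> U p y -> x = y.
Variable gamma : R.
Hypothesis Hg : 0 < gamma < 1.
Variable Nn : nat.
Hypothesis HN : (1 <= Nn)%nat.

Definition Fb (x : list bool) := (Nn <= length x)%nat /\ exists p, U p x /\ INR (length p) < gamma * INR (length x).

Lemma c_small j : (j < Nn)%nat -> c Fb j = 0.
Proof.
  intros Hj. unfold c. rewrite <- (sumS_zero j). apply sumS_ext; intros x Hx.
  apply ind_F. intros [H _]. lia.
Qed.

Lemma c_bound j : c Fb j <= 2 * Rpower 2 (gamma * INR j).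
Proof.
  destruct (le_lt_dec Nn j) as [Hj|Hj]; [|rewrite c_small by auto; assert (0 < Rpower 2 (gamma * INR j)) by (unfold Rpower; apply exp_pos); lra].
  assert (Hjpos : 0 < INR j) by (apply lt_0_INR; lia).
  unfold c. eapply Rle_trans.
  { apply (sumS_le j _ (fun x => sumN j (fun l => indP (INR l < gamma * INR j) * sumS l (fun p => indP (U p x))))).
    intros x Hx. destruct (classic (Fb x)) as [Hf|Hf]; [|rewrite (ind_F _ Hf); apply sumN_nonneg; intros;
      apply Rmult_le_pos; [apply ind_bnd|apply sumS_nonneg; intros; apply ind_bnd]].
    rewrite (ind_T _ Hf). destruct Hf as [_ (p & Up & Hp)]. rewrite Hx in Hp.
    assert (Hl : (length p < j)%nat).
    { apply INR_lt. nra. }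
    eapply Rle_trans; [|apply (sumN_ge_term j _ (length p)); auto;
      intros; apply Rmult_le_pos; [apply ind_bnd|apply sumS_nonneg; intros; apply ind_bnd]].
    cbv beta. rewrite (ind_T _ Hp), Rmult_1_l.
    rewrite <- (ind_T _ Up). apply (sumS_ge_point _ (fun p => indP (U p x))); auto.
    intros; apply ind_bnd. }
  rewrite (sumS_sumN j j (fun l x => indP (INR l < gamma * INR j) * sumS l (fun p => indP (U p x)))).
  eapply Rle_trans; [|apply (pow2_sum (gamma * INR j)); nra].
  apply sumN_le; intros l Hl. rewrite sumS_scal. apply Rmult_le_compat_l; [apply ind_bnd|].
  rewrite sumS_comm. rewrite <- (Rmult_1_l (2 ^ l)), <- sumS_const. apply sumS_le; intros p _.
  apply sumS_atmost1. intros; eapply Ufun; eauto.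
Qed.

End Bound.

Close Scope R_scope.

Section Konig.
Variable Fk : list bool -> Prop.
Hypothesis Hex : forall n, exists x, length x = n /\ good Fk x.

Definition extendable (x : list bool) := forall m, exists z, length z = m /\ good Fk (x ++ z).

Lemma ext_nil : extendable [].
Proof. intros m. destruct (Hex m) as [x [H1 H2]]. exists x; auto. Qed.

Lemma ext_step x : extendable x -> extendable (x ++ [false]) \/ extendable (x ++ [true]).
Proof.
  intros He. apply NNPP; intros Hn.
  assert (H0 : ~ extendable (x ++ [false])) by tauto.
  assert (H1 : ~ extendable (x ++ [true])) by tauto.
  apply not_all_ex_not in H0 as [m0 H0]. apply not_all_ex_not in H1 as [m1 H1].
  destruct (He (S (Nat.max m0 m1))) as [z [Hz Gz]].
  destruct z as [|b z]; [discriminate|]. simpl in Hz.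
  assert (Hb : forall mb, (mb <= length z)%nat -> good Fk ((x ++ [b]) ++ firstn mb z)).
  { intros mb Hmb. apply (good_prefix _ _ (skipn mb z)). rewrite <- !app_assoc, firstn_skipn. exact Gz. }
  destruct b.
  - apply H1. exists (firstn m1 z). split; [rewrite length_firstn; lia|apply Hb; lia].
  - apply H0. exists (firstn m0 z). split; [rewrite length_firstn; lia|apply Hb; lia].
Qed.

Fixpoint pre (n : nat) : list bool :=
  match n with
  | O => []
  | S n => pre n ++ [if excluded_middle_informative (extendable (pre n ++ [true])) then true else false]
  end.

Lemma pre_ok n : extendable (pre n) /\ length (pre n) = n.
Proof.
  induction n as [|n [IH1 IH2]]; [split; [apply ext_nil|reflexivity]|].
  simpl. split; [|rewrite length_app, IH2; simpl; lia].
  destruct excluded_middle_informative as [H|H]; auto.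
  destruct (ext_step _ IH1); tauto.
Qed.

Definition omg (k : nat) : bool := nth k (pre (S k)) false.

Lemma pre_S n : pre (S n) = pre n ++ [omg n].
Proof.
  unfold omg. change (pre (S n)) with (pre n ++ [if excluded_middle_informative (extendable (pre n ++ [true])) then true else false]). rewrite app_nth2 by (rewrite (proj2 (pre_ok n)); lia).
  rewrite (proj2 (pre_ok n)), Nat.sub_diag. reflexivity.
Qed.

Lemma pre_sub i n : pre (i + n) = pre i ++ substring omg i n.
Proof.
  induction n.
  - rewrite Nat.add_0_r. unfold substring. simpl. rewrite app_nil_r; reflexivity.
  - rewrite Nat.add_succ_r, pre_S, IHn. unfold substring. rewrite seq_S, map_app. simpl.
    rewrite app_assoc. reflexivity.
Qed.

Lemma omg_good i n : ~ Fk (substring omg i n).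
Proof.
  destruct (proj1 (pre_ok (i + n)) O) as [z [Hz Gz]].
  destruct z; [|discriminate]. apply (Gz (pre i) _ []).
  rewrite pre_sub, !app_nil_r. reflexivity.
Qed.

End Konig.

Open Scope R_scope.

Theorem mainTheorem2 :
  forall U : machine, optimal_prefix_machine U ->
  forall gamma : R, gamma < 1 ->
  exists (omega : nat -> bool) (N : nat),
    forall i n : nat, (N <= n)%nat ->
      forall k : nat, is_K U (substring omega i n) k ->
        gamma * INR n <= INR k.
Proof.
  intros U [[Hcomp _] _] gamma Hgam.
  pose proof (comp_functional U Hcomp) as Ufun.
  set (g := Rmax gamma (1/2)).
  assert (Hg1 : gamma <= g) by apply Rmax_l.
  assert (Hg2 : 1/2 <= g) by apply Rmax_r.
  assert (Hg3 : g < 1) by (unfold g; apply Rmax_lub_lt; lra).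
  set (r0 := Rpower 2 g). set (beta := Rpower 2 (- (1 + g) / 2)). set (r := r0 * beta).
  assert (Hr0 : 0 < r0) by (unfold r0, Rpower; apply exp_pos).
  assert (Hbeta : 0 < beta) by (unfold beta, Rpower; apply exp_pos).
  assert (Hr : r = Rpower 2 ((g - 1) / 2)).
  { unfold r, r0, beta. rewrite <- Rpower_plus. f_equal. field. }
  assert (Hrpos : 0 < r) by (rewrite Hr; unfold Rpower; apply exp_pos).
  assert (Hr1 : r < 1).
  { rewrite Hr. apply Rlt_le_trans with (Rpower 2 0); [apply Rpower_lt; lra|rewrite Rpower_O; lra]. }
  assert (Hbeta2 : 1/2 < beta).
  { replace (1/2) with (Rpower 2 (- (1))).
    - apply Rpower_lt; lra.
    - rewrite Rpower_Ropp, Rpower_1 by lra. field. }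
  set (eps := (2 * beta - 1) * (1 - r) / 2).
  assert (Heps : 0 < eps) by (unfold eps; apply Rdiv_lt_0_compat; nra).
  destruct (pow_lt_1_zero r ltac:(rewrite Rabs_right; lra) eps Heps) as [N0 HN0].
  set (Nn := S N0).
  assert (HN : (1 <= Nn)%nat) by (unfold Nn; lia).
  assert (HrN : r ^ Nn < eps).
  { specialize (HN0 Nn ltac:(unfold Nn; lia)). rewrite Rabs_right in HN0; auto.
    apply Rle_ge, pow_le; lra. }
  set (Fk := Fb U g Nn).
  assert (HF0 : ~ Fk []) by (intros [H _]; simpl in H; lia).
  assert (Hgood0 : good Fk []).
  { intros a b c E. destruct a, b; try discriminate. auto. }
  assert (Hpos : forall n, 0 < s Fk n).
  { intros n. apply (levin_real (s Fk) (c Fk) beta); auto.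
    - unfold s. simpl. apply ind_T; auto.
    - intros j. apply sumS_nonneg. intros; apply ind_bnd.
    - intros m. apply recurrence; auto.
    - intros m.
      assert (Hterm : forall j, c Fk (S j) * beta ^ S j <= 2 * (indP (Nn <= S j)%nat * r ^ S j)).
      { intros j. destruct (le_lt_dec Nn (S j)) as [Hj|Hj].
        - rewrite (ind_T _ Hj). pose proof (c_bound U Ufun g ltac:(lra) Nn HN (S j)) as Hc.
          fold Fk in Hc.
          replace (Rpower 2 (g * INR (S j))) with (r0 ^ S j) in Hc
            by (unfold r0; rewrite <- Rpower_mult, Rpower_pow; auto).
          unfold r. rewrite Rpow_mult_distr.
          assert (0 < beta ^ S j) by (apply pow_lt; lra).
          nra.
        - pose proof (c_small U g Nn HN (S j) Hj) as Hc0. fold Fk in Hc0. rewrite Hc0. rewrite ind_F by lia.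
          assert (0 < beta ^ S j) by (apply pow_lt; lra). nra. }
      eapply Rle_trans; [apply (sumN_le m _ _ (fun j _ => Hterm j))|].
      rewrite sumN_scal.
      pose proof (geo r Nn ltac:(lra) HN m) as Hgeo.
      assert (0 <= r ^ Nat.max Nn (S m)) by (apply pow_le; lra).
      assert (Hs : (1 - r) * sumN m (fun j => indP (Nn <= S j)%nat * r ^ S j) <= eps) by lra.
      assert (2 * beta - 1 = 2 * eps / (1 - r)) by (unfold eps; field; lra).
      rewrite H0. apply Rmult_le_reg_l with (1 - r); [lra|].
      replace ((1 - r) * (2 * eps / (1 - r))) with (2 * eps) by (field; lra). lra. }
  assert (Hex : forall n, exists x, length x = n /\ good Fk x).
  { intros n. apply NNPP; intros Hno. specialize (Hpos n). unfold s in Hpos.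
    rewrite (sumS_ext n _ (fun _ => 0)), sumS_zero in Hpos; [lra|].
    intros x Hx. apply ind_F. intros Gx. apply Hno; eauto. }
  exists (omg Fk), Nn. intros i n Hn k [[p [Up Hp]] _].
  apply Rnot_lt_le. intros Hlt.
  apply (omg_good Fk Hex i n). split.
  - unfold substring. rewrite length_map, length_seq. auto.
  - exists p. split; auto. unfold substring. rewrite length_map, length_seq, Hp.
    assert (0 <= INR n) by apply pos_INR. nra.
Qed.
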